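(* Let $(A,B)$ be an admissible pair of $n\times n$ complex matrices and put $r_A=\mathrm{rank}(A)$, $r_B=\mathrm{rank}(B)$. Then $m:=r_A+r_B-n\ge 0$, and there exists a permutation $\Pi$ of $\{1,\dots,n\}$ such that the boundary condition $A\Psi+B\Psi'=0$ is equivalent (i.e. has exactly the same solution pairs $(\Psi,\Psi')\in\mathbb C^n\times\mathbb C^n$) to the PQRS-form condition $$B_{PQRS}\tilde\Psi'=A_{PQRS}\tilde\Psi,\qquad \tilde\Psi=(\psi_{\Pi(1)}(0),\dots,\psi_{\Pi(n)}(0))^T,\ \tilde\Psi'=(\psi'_{\Pi(1)}(0),\dots,\psi'_{\Pi(n)}(0))^T,$$ for some matrices $P\in\mathbb C^{m\times(n-r_B)}$, $Q\in\mathbb C^{(n-r_A)\times(n-r_B)}$, $R\in\mathbb C^{(n-r_A)\times m}$ and some invertible self-adjoint $S\in\mathbb C^{m\times m}$. For a given admissible permutation $\Pi$, the matrices $P,Q,R,S$ (with $S$ invertible self-adjoint) are uniquely determined; choosing the lexicographically smallest admissible $\Pi$ makes the representation unique.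
   Context: A vertex coupling at a vertex of degree $n$ of a quantum graph is given by boundary conditions $A\Psi+B\Psi'=0$, where $A,B\in\mathbb C^{n\times n}$ and $\Psi=(\psi_1(0),\dots,\psi_n(0))^T$, $\Psi'=(\psi_1'(0),\dots,\psi_n'(0))^T$ are the vectors of boundary values and boundary derivatives of the wave function on the $n$ edges at the vertex. The pair $(A,B)$ is called admissible if the $n\times 2n$ matrix $(A|B)$ has rank $n$ and $AB^*$ is self-adjoint. $I^{(j)}$ denotes the $j\times j$ identity matrix. With $m=r_A+r_B-n$, $a=n-r_A$, $b=n-r_B$, $S\in\mathbb C^{m\times m}$ self-adjoint, $P\in\mathbb C^{m\times b}$, $Q\in\mathbb C^{a\times b}$, $R\in\mathbb C^{a\times m}$, define the $n\times n$ block matrices (block sizes $m,a,b$) $$B_{PQRS}=\begin{pmatrix} I^{(m)} & 0 & P\\ R & I^{(a)} & Q\\ 0&0&0\end{pmatrix},\qquad A_{PQRS}=\begin{pmatrix} S & -SR^* & 0\\ 0&0&0\\ -P^* & (RP-Q)^* & I^{(b)}\end{pmatrix}.$$ *)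

(* Defs.v *)
(* Complex numbers are modelled by an arbitrary
   numClosedFieldType C (includes the complex numbers; conjugation is x^* ). *)
From HB Require Import structures.
From mathcomp Require Import all_boot all_order all_algebra all_fingroup.
Set Implicit Arguments. Unset Strict Implicit. Unset Printing Implicit Defensive.
Import Order.TTheory GRing.Theory Num.Theory.
Local Open Scope ring_scope.

Definition mxadj (C : numClosedFieldType) (p q : nat) (M : 'M[C]_(p, q)) : 'M[C]_(q, p) :=
  map_mx (fun x => x^*) M^T.

Definition selfadj (C : numClosedFieldType) (p : nat) (M : 'M[C]_p) : Prop :=
  mxadj M = M.

Definition admissible (C : numClosedFieldType) (n : nat) (A B : 'M[C]_n) : Prop :=
  \rank (row_mx A B) = n /\ selfadj (A *m mxadj B).

Definition Bpqrs (C : numClosedFieldType) (m a b : nat)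
  (P : 'M[C]_(m, b)) (Q : 'M[C]_(a, b)) (R : 'M[C]_(a, m)) : 'M[C]_(m + a + b) :=
  block_mx (block_mx 1%:M 0 R 1%:M) (col_mx P Q) 0 0.

Definition Apqrs (C : numClosedFieldType) (m a b : nat)
  (P : 'M[C]_(m, b)) (Q : 'M[C]_(a, b)) (R : 'M[C]_(a, m)) (S : 'M[C]_m)
  : 'M[C]_(m + a + b) :=
  block_mx (block_mx S (- (S *m mxadj R)) 0 0) 0
           (row_mx (- mxadj P) (mxadj (R *m P - Q))) 1%:M.

(* The block matrices have size m+a+b, which equals n
   whenever n <= rank A + rank B; conform_mx transports them to size n. *)
Definition pqrs_rep (C : numClosedFieldType) (n : nat) (A B : 'M[C]_n) (s : 'S_n)
  (P : 'M[C]_(\rank A + \rank B - n, n - \rank B))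
  (Q : 'M[C]_(n - \rank A, n - \rank B))
  (R : 'M[C]_(n - \rank A, \rank A + \rank B - n))
  (S : 'M[C]_(\rank A + \rank B - n)) : Prop :=
  [/\ S \in unitmx, selfadj S &
   forall X Y : 'cV[C]_n,
     A *m X + B *m Y = 0 <->
     conform_mx (0 : 'M[C]_n) (Bpqrs P Q R) *m row_perm s Y =
     conform_mx (0 : 'M[C]_n) (Apqrs P Q R S) *m row_perm s X].
Arguments pqrs_rep {C n} A B s P Q R S.

(* Main.v *)
Require Import Defs.
From HB Require Import structures.
From mathcomp Require Import all_boot all_order all_algebra all_fingroup.
From Stdlib Require Import Lia.
Set Implicit Arguments. Unset Strict Implicit. Unset Printing Implicit Defensive.
Import Order.TTheory GRing.Theory Num.Theory.
Local Open Scope ring_scope.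

Section Adj.
Variable C : numClosedFieldType.

Lemma mxadjE p q (M : 'M[C]_(p, q)) : mxadj M = map_mx Num.conj M^T.
Proof. by []. Qed.

Lemma adjK p q (M : 'M[C]_(p, q)) : mxadj (mxadj M) = M.
Proof.
rewrite !mxadjE map_trmx trmxK -map_mx_comp; apply: map_mx_id => x /=.
exact: conjCK.
Qed.

Lemma adjM p q r (A : 'M[C]_(p, q)) (B : 'M[C]_(q, r)) :
  mxadj (A *m B) = mxadj B *m mxadj A.
Proof. by rewrite !mxadjE trmx_mul map_mxM. Qed.

Lemma adjD p q (A B : 'M[C]_(p, q)) : mxadj (A + B) = mxadj A + mxadj B.
Proof. by rewrite !mxadjE linearD /= map_mxD. Qed.

Lemma adjN p q (A : 'M[C]_(p, q)) : mxadj (- A) = - mxadj A.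
Proof. by rewrite !mxadjE linearN /= map_mxN. Qed.

Lemma adj0 p q : mxadj (0 : 'M[C]_(p, q)) = 0.
Proof. by rewrite !mxadjE trmx0 map_mx0. Qed.

Lemma adj1 p : mxadj (1%:M : 'M[C]_p) = 1%:M.
Proof. by rewrite !mxadjE trmx1 map_mx1. Qed.

Lemma adj_block p1 p2 q1 q2 (a : 'M[C]_(p1, q1)) (b : 'M[C]_(p1, q2))
  (c : 'M[C]_(p2, q1)) (d : 'M[C]_(p2, q2)) :
  mxadj (block_mx a b c d) = block_mx (mxadj a) (mxadj c) (mxadj b) (mxadj d).
Proof. by rewrite !mxadjE tr_block_mx map_block_mx. Qed.

Lemma adj_col p1 p2 q (a : 'M[C]_(p1, q)) (b : 'M[C]_(p2, q)) :
  mxadj (col_mx a b) = row_mx (mxadj a) (mxadj b).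
Proof. by rewrite !mxadjE tr_col_mx map_row_mx. Qed.

Lemma adj_row p q1 q2 (a : 'M[C]_(p, q1)) (b : 'M[C]_(p, q2)) :
  mxadj (row_mx a b) = col_mx (mxadj a) (mxadj b).
Proof. by rewrite !mxadjE tr_row_mx map_col_mx. Qed.

Lemma adj_inv p (M : 'M[C]_p) : mxadj (invmx M) = invmx (mxadj M).
Proof. by rewrite !mxadjE trmx_inv map_invmx. Qed.

Lemma rank_adj p q (M : 'M[C]_(p, q)) : \rank (mxadj M) = \rank M.
Proof. by rewrite mxadjE mxrank_map mxrank_tr. Qed.

Lemma adj_perm p (s : 'S_p) : mxadj (perm_mx s : 'M[C]_p) = perm_mx s^-1.
Proof. by rewrite mxadjE tr_perm_mx map_perm_mx. Qed.

Lemma adj_inj p q (A B : 'M[C]_(p, q)) : mxadj A = mxadj B -> A = B.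
Proof. by move=> h; rewrite -(adjK A) h adjK. Qed.

End Adj.

Section Blocks.
Variable C : numClosedFieldType.
Variables m a b : nat.
Implicit Types (P : 'M[C]_(m, b)) (Q : 'M[C]_(a, b)) (R : 'M[C]_(a, m)) (S : 'M[C]_m).

Lemma BpE P Q R (y1 : 'cV[C]_m) (y2 : 'cV[C]_a) (y3 : 'cV[C]_b) :
  Bpqrs P Q R *m col_mx (col_mx y1 y2) y3 =
  col_mx (col_mx (y1 + P *m y3) (R *m y1 + y2 + Q *m y3)) 0.
Proof.
rewrite /Bpqrs mul_block_col mul_block_col mul_col_mx add_col_mx !mul1mx !mul0mx.
by rewrite !addr0.
Qed.

Lemma ApE P Q R S (x1 : 'cV[C]_m) (x2 : 'cV[C]_a) (x3 : 'cV[C]_b) :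
  Apqrs P Q R S *m col_mx (col_mx x1 x2) x3 =
  col_mx (col_mx (S *m x1 - S *m mxadj R *m x2) 0)
         (- mxadj P *m x1 + mxadj (R *m P - Q) *m x2 + x3).
Proof.
rewrite /Apqrs mul_block_col mul_block_col mul_row_col !mul0mx !mul1mx.
by rewrite !addr0 mulNmx.
Qed.

End Blocks.

Section Uniq.
Variable C : numClosedFieldType.

Lemma vec_ext p q (M N : 'M[C]_(p, q)) :
  (forall x : 'cV_q, M *m x = N *m x) -> M = N.
Proof.
move=> h; apply/matrixP => i j.
have := congr1 (fun v : 'cV_p => v i 0) (h (delta_mx j 0)).
by rewrite -!colE !mxE.
Qed.

Variables m a b : nat.

Lemma uniq_core (P P' : 'M[C]_(m, b)) (Q Q' : 'M[C]_(a, b)) (R R' : 'M[C]_(a, m))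
  (S S' : 'M[C]_m) : S \in unitmx ->
  (forall X Y : 'cV[C]_(m + a + b), Bpqrs P Q R *m Y = Apqrs P Q R S *m X ->
               Bpqrs P' Q' R' *m Y = Apqrs P' Q' R' S' *m X) ->
  [/\ P = P', Q = Q', R = R' & S = S'].
Proof.
move=> Su h.
have h1 (x : 'cV[C]_m) : [/\ S *m x = S' *m x, mxadj P *m x = mxadj P' *m x
             & R' *m (S *m x) = R *m (S *m x)].
  have := h (col_mx (col_mx x 0) (mxadj P *m x))
            (col_mx (col_mx (S *m x) (- (R *m (S *m x)))) 0).
  rewrite !BpE !ApE !mulmx0 !addr0 subrr !mulNmx addNr !subr0.
  move=> /(_ erefl) /eq_col_mx [/eq_col_mx [e1 e2] e3].
  split => //.
    by apply/eqP; rewrite -subr_eq0 addrC -e3.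
  by apply/eqP; rewrite -subr_eq0 e2.
have eS : S = S' by apply: vec_ext => x; case: (h1 x).
have eP : P = P'.
  by apply: adj_inj; apply: vec_ext => x; case: (h1 x).
have eR : R = R'.
  have e : R' *m S = R *m S by apply: vec_ext => x; rewrite -!mulmxA; case: (h1 x).
  by rewrite -(mulmxK Su R) -e mulmxK.
subst S' P' R'; split => //.
apply: vec_ext => y.
have := h 0 (col_mx (col_mx (- (P *m y)) (R *m (P *m y) - Q *m y)) y).
rewrite !BpE !mulmx0 mulmxN addNr addrA addNr add0r.
rewrite addNr !col_mx0.
move=> /(_ erefl) e.
have : col_mx (col_mx 0 (- (Q *m y) + Q' *m y)) 0 =
       col_mx (col_mx (0 : 'cV[C]_m) (0 : 'cV[C]_a)) (0 : 'cV[C]_b).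
  by rewrite e !col_mx0.
move=> /eq_col_mx [/eq_col_mx [_ e'] _].
by apply/eqP; rewrite eq_sym -subr_eq0 addrC e'.
Qed.

End Uniq.

Section Helpers.
Variable F : fieldType.

Lemma rank_colmx_le p1 p2 q (X : 'M[F]_(p1, q)) (Y : 'M[F]_(p2, q)) :
  (\rank (col_mx X Y) <= \rank X + \rank Y)%N.
Proof. by rewrite -addsmxE; exact: (mxrank_adds_leqif X Y).1. Qed.

Lemma rank_mul_unitl p q (G : 'M[F]_p) (M : 'M[F]_(p, q)) :
  G \in unitmx -> \rank (G *m M) = \rank M.
Proof.
move=> Gu; rewrite -mxrank_tr trmx_mul mxrankMfree ?mxrank_tr //.
by rewrite row_free_unit unitmx_tr.
Qed.

Lemma rank_mul_unitr p q (G : 'M[F]_q) (M : 'M[F]_(p, q)) :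
  G \in unitmx -> \rank (M *m G) = \rank M.
Proof. by move=> Gu; rewrite mxrankMfree // row_free_unit. Qed.

Lemma colsub_mul p q r k (f : 'I_k -> 'I_r) (X : 'M[F]_(p, q)) (Y : 'M[F]_(q, r)) :
  colsub f (X *m Y) = X *m colsub f Y.
Proof. by apply/matrixP => i j; rewrite !mxE; apply: eq_bigr => l _; rewrite !mxE. Qed.

Lemma colperm_mul p q r (s : 'S_q) (A : 'M[F]_(p, q)) (X : 'M[F]_(q, r)) :
  col_perm s A *m row_perm s X = A *m X.
Proof.
by rewrite col_permE row_permE -mulmxA (mulmxA (perm_mx s^-1)) -perm_mxM mulVg perm_mx1 mul1mx.
Qed.

Lemma col_perm_mull p q r (s : 'S_r) (X : 'M[F]_(p, q)) (Y : 'M[F]_(q, r)) :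
  col_perm s (X *m Y) = X *m col_perm s Y.
Proof. by rewrite !col_permE mulmxA. Qed.

Lemma row_permK' p q (s : 'S_p) (X : 'M[F]_(p, q)) : row_perm s (row_perm s^-1 X) = X.
Proof. by rewrite -row_permM mulgV row_permE perm_mx1 mul1mx. Qed.

End Helpers.

Lemma colperm_adj (C : numClosedFieldType) p q (s : 'S_q) (A B : 'M[C]_(p, q)) :
  col_perm s A *m mxadj (col_perm s B) = A *m mxadj B.
Proof.
rewrite !col_permE adjM adj_perm -mulmxA (mulmxA (perm_mx s^-1)) -perm_mxM mulgV.
by rewrite perm_mx1 mul1mx.
Qed.

Section Perms.

Lemma perm_ext p q (f : 'I_p -> 'I_(p + q)) : injective f ->
  exists s : 'S_(p + q), forall i, s (lshift q i) = f i.
Proof.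
move=> finj.
pose T := [set f i | i in 'I_p].
have cT : #|~: T| = q.
  have := cardsC T; rewrite card_imset // !card_ord => /eqP.
  by rewrite eqn_add2l => /eqP.
pose g (i : 'I_(p + q)) : 'I_(p + q) :=
  match split i with inl j => f j | inr k => enum_val (cast_ord (esym cT) k) end.
have ginj : injective g.
  move=> i1 i2; rewrite /g.
  case: splitP => [j1 e1|k1 e1]; case: splitP => [j2 e2|k2 e2] eq;
    apply: val_inj; rewrite /= e1 e2.
  - by rewrite (finj _ _ eq).
  - have := enum_valP (cast_ord (esym cT) k2).
    by rewrite -eq in_setC imset_f.
  - have := enum_valP (cast_ord (esym cT) k1).
    by rewrite eq in_setC imset_f.
  - by have := cast_ord_inj (enum_val_inj eq) => ->.
exists (perm ginj) => i.
by rewrite permE /g (unsplitK (inl _ i)).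
Qed.

Lemma perm_lift (R : Type) p q (t : 'S_p) :
  exists s : 'S_(p + q), forall k (M : 'M[R]_(k, p + q)),
    col_perm s M = row_mx (col_perm t (lsubmx M)) (rsubmx M).
Proof.
pose g (i : 'I_(p + q)) : 'I_(p + q) :=
  match split i with inl j => lshift q (t j) | inr k => rshift p k end.
have ginj : injective g.
  move=> i1 i2; rewrite /g.
  case: splitP => [j1 e1|k1 e1]; case: splitP => [j2 e2|k2 e2] /(congr1 val) /= eq;
    apply: val_inj; rewrite /= e1 e2.
  - by rewrite (perm_inj (val_inj eq)).
  - by move: (ltn_ord (t j1)); rewrite eq ltnNge leq_addr.
  - by move: (ltn_ord (t j2)); rewrite -eq ltnNge leq_addr.
  - by move/eqP: eq; rewrite eqn_add2l => /eqP ->.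
exists (perm ginj) => k M.
apply/matrixP => i j; rewrite !mxE permE /g.
by case: splitP => [j1 e1|k1 e1]; rewrite !mxE.
Qed.

End Perms.

Lemma exists_indep (F : fieldType) p q (M : 'M[F]_(p, q)) : \rank M = p ->
  exists f : 'I_p -> 'I_q, injective f /\ colsub f M \in unitmx.
Proof.
move=> e.
have := maxrowsub_free M^T; have := @maxrankfun_inj _ _ _ M^T.
move: (maxrankfun M^T); rewrite mxrank_tr e => g ginj gfree.
exists g; split => //.
have -> : colsub g M = (rowsub g M^T)^T by apply/matrixP => i j; rewrite !mxE.
by rewrite unitmx_tr -row_free_unit.
Qed.

Lemma adj_rowsub (C : numClosedFieldType) p q k (g : 'I_k -> 'I_p) (H : 'M[C]_(p, q)) :
  mxadj (rowsub g H) = colsub g (mxadj H).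
Proof. by apply/matrixP => i j; rewrite !mxE. Qed.

Lemma exists_principal (C : numClosedFieldType) r m (H : 'M[C]_r) :
  selfadj H -> \rank H = m ->
  exists f : 'I_m -> 'I_r, injective f /\ colsub f (rowsub f H) \in unitmx.
Proof.
move=> sH e.
have := eq_maxrowsub H; have := maxrowsub_free H; have := @maxrankfun_inj _ _ _ H.
move: (maxrankfun H); rewrite e => g ginj gfree geq.
exists g; split => //.
have [X hX] : exists X, H = X *m rowsub g H.
  by apply/submxP; rewrite geq submx_refl.
have r1 : \rank (colsub g H) = m.
  rewrite -{1}sH -adj_rowsub rank_adj.
  by move: gfree; rewrite /row_free => /eqP.
rewrite -row_free_unit /row_free eqn_leq rank_leq_row /=.
by rewrite -{1}r1 {1}hX colsub_mul mxrankM_maxr.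
Qed.

Lemma final_form (C : numClosedFieldType) m a b (H : 'M[C]_(m + a)) (K : 'M[C]_(m + a, b)) :
  selfadj H -> \rank H = m -> ulsubmx H \in unitmx ->
  exists (G : 'M[C]_(m + a + b)) P Q R S, [/\ G \in unitmx, S \in unitmx, selfadj S,
    G *m block_mx H 0 (mxadj K) (- 1%:M) = - Apqrs P Q R S &
    G *m block_mx 1%:M K 0 0 = Bpqrs P Q R].
Proof.
move=> sH rH uH.
set H11 := ulsubmx H; set H12 := ursubmx H; set H21 := dlsubmx H; set H22 := drsubmx H.
have eH : H = block_mx H11 H12 H21 H22 by rewrite submxK.
have : block_mx (mxadj H11) (mxadj H21) (mxadj H12) (mxadj H22) = block_mx H11 H12 H21 H22.
  by rewrite -adj_block -eH sH.
case/eq_block_mx => s11 s21 s12 s22.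
set Y := invmx H11.
have schur : H22 - H21 *m Y *m H12 = 0.
  pose E1 : 'M[C]_(m + a) := block_mx 1%:M 0 (- (H21 *m Y)) 1%:M.
  pose E2 : 'M[C]_(m + a) := block_mx 1%:M (- (Y *m H12)) 0 1%:M.
  have E1u : E1 \in unitmx by rewrite unitmxE det_lblock !det1 mulr1 unitr1.
  have E2u : E2 \in unitmx by rewrite unitmxE det_ublock !det1 mulr1 unitr1.
  have : E1 *m H *m E2 = block_mx H11 0 0 (H22 - H21 *m Y *m H12).
    rewrite eH !mulmx_block !mul1mx !mul0mx !mulmx1 !mulmx0 !addr0 !mulNmx mulmxKV // addNr mul0mx add0r.
    by rewrite mulmxN mulmxA mulmxV // mul1mx addNr addrC.

  move/(congr1 mxrank); rewrite rank_mul_unitr // rank_mul_unitl // rank_diag_block_mx rH.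
  rewrite mxrank_unit // => /eqP; rewrite -{1}(addn0 m) eqn_add2l eq_sym mxrank_eq0.
  by move/eqP.
pose R := - (H21 *m Y); pose S := - H11.
pose P := usubmx K; pose Q := dsubmx K + R *m usubmx K.
exists (block_mx (block_mx 1%:M 0 R 1%:M) 0 0 1%:M), P, Q, R, S; split.
- by rewrite unitmxE det_ublock det_lblock !det1 !mulr1 unitr1.
- by rewrite /S -scaleN1r unitmxZ // unitrN1.
- by rewrite /selfadj /S adjN s11.
- rewrite /Apqrs mulmx_block !mul0mx !mulmx0 !mul1mx !addr0 add0r opp_block_mx.
  rewrite {1}eH mulmx_block !mul1mx !mul0mx !addr0 add0r opp_block_mx.
  rewrite !oppr0 opprK; congr block_mx; first congr block_mx.
  + rewrite opprK /S /R /Y adjN adjM adj_inv s11 s21.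
    by rewrite mulmxN mulNmx opprK mulmxA mulmxV // mul1mx.
  + by rewrite /R /Y mulNmx mulmxKV // addNr.
  + by rewrite /R mulNmx addrC schur.
  + rewrite -{1}(vsubmxK K) adj_col opp_row_mx opprK /Q /P (addrC (dsubmx K)).
    by rewrite opprD addrA subrr add0r adjN opprK.
- rewrite /Bpqrs mulmx_block ?mul0mx ?mulmx0 ?mul1mx ?mulmx1 ?addr0 ?add0r.
  rewrite -{1}(vsubmxK K) mul_block_col !mul1mx mul0mx ?add0r ?addr0 /Q /P.
  by rewrite addrC.
Qed.

Lemma lsub_block (R : Type) p1 p2 q1 q2 (x : 'M[R]_(p1, q1)) (y : 'M[R]_(p1, q2))
  (z : 'M[R]_(p2, q1)) (w : 'M[R]_(p2, q2)) : lsubmx (block_mx x y z w) = col_mx x z.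
Proof. by rewrite block_mxEh row_mxKl. Qed.

Lemma rsub_block (R : Type) p1 p2 q1 q2 (x : 'M[R]_(p1, q1)) (y : 'M[R]_(p1, q2))
  (z : 'M[R]_(p2, q1)) (w : 'M[R]_(p2, q2)) : rsubmx (block_mx x y z w) = col_mx y w.
Proof. by rewrite block_mxEh row_mxKr. Qed.

Lemma col_perm_col (R : Type) p1 p2 q (t : 'S_q) (X : 'M[R]_(p1, q)) (Y : 'M[R]_(p2, q)) :
  col_perm t (col_mx X Y) = col_mx (col_perm t X) (col_perm t Y).
Proof.
apply/matrixP => i j; rewrite !mxE.
by case: splitP => k _; rewrite !mxE.
Qed.

Lemma adj_rowperm (C : numClosedFieldType) p q (t : 'S_p) (K : 'M[C]_(p, q)) :
  mxadj (row_perm t K) = col_perm t (mxadj K).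
Proof. by rewrite row_permE col_permE adjM adj_perm. Qed.

Lemma stage2 (C : numClosedFieldType) m a b (A B : 'M[C]_(m + a + b))
  (G : 'M[C]_(m + a + b)) (H : 'M[C]_(m + a)) (K : 'M[C]_(m + a, b)) :
  G \in unitmx -> selfadj H -> \rank H = m ->
  G *m A = block_mx H 0 (mxadj K) (- 1%:M) -> G *m B = block_mx 1%:M K 0 0 ->
  exists s : 'S_(m + a + b), exists G' P Q R S,
   [/\ G' \in unitmx, S \in unitmx, selfadj S,
   G' *m col_perm s A = - Apqrs P Q R S & G' *m col_perm s B = Bpqrs P Q R].
Proof.
move=> Gu sH rH hA hB.
have [f [finj fu]] := exists_principal sH rH.
have [t ht] := perm_ext finj.
have [s hs] := @perm_lift C _ b t.
pose H' := row_perm t (col_perm t H); pose K' := row_perm t K.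
have eH' : H' = perm_mx t *m H *m perm_mx t^-1 by rewrite /H' row_permE col_permE mulmxA.
have sH' : selfadj H'.
  by rewrite /selfadj eH' !adjM !adj_perm invgK sH mulmxA.
have rH' : \rank H' = m.
  by rewrite eH' rank_mul_unitr ?unitmx_perm // rank_mul_unitl ?unitmx_perm.
have uH' : ulsubmx H' \in unitmx.
  have -> : ulsubmx H' = colsub f (rowsub f H).
    by apply/matrixP => i j; rewrite !mxE !ht.
  exact: fu.
have [G2 [P [Q [R [S [G2u Su sS eA eB]]]]]] := final_form K' sH' rH' uH'.
exists s, (G2 *m block_mx (perm_mx t) 0 0 1%:M *m G), P, Q, R, S; split => //.
- rewrite !unitmx_mul G2u Gu /= andbT unitmxE det_ublock det1 mulr1 -unitmxE.
  by rewrite unitmx_perm.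
- rewrite -!mulmxA -col_perm_mull hA hs lsub_block rsub_block col_perm_col -block_mxEh.
  rewrite mulmx_block !mul0mx !mulmx0 !mul1mx !addr0 ?add0r -eA.
  by rewrite /H' /K' adj_rowperm row_permE.
- rewrite -!mulmxA -col_perm_mull hB hs lsub_block rsub_block col_perm_col -block_mxEh.
  rewrite mulmx_block !mul0mx !mulmx0 !mul1mx !addr0 ?add0r -eB.
  rewrite /K' row_permE; congr (_ *m block_mx _ _ _ _).
  + by rewrite col_permE mul1mx -perm_mxM mulgV perm_mx1.
  + by apply/matrixP => i j; rewrite !mxE.
Qed.

Lemma dsub_row (R : Type) p1 p2 q1 q2 (X : 'M[R]_(p1 + p2, q1)) (Y : 'M[R]_(p1 + p2, q2)) :
  dsubmx (row_mx X Y) = row_mx (dsubmx X) (dsubmx Y).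
Proof. by apply/matrixP => i j; rewrite !mxE; case: splitP => k _; rewrite !mxE. Qed.

Lemma col_perm0 (R : GRing.Nmodule.Exports.nmodType) p q (s : 'S_q) :
  col_perm s (0 : 'M[R]_(p, q)) = 0.
Proof. by apply/matrixP => i j; rewrite !mxE. Qed.

Lemma selfadj_conj (C : numClosedFieldType) p q (G : 'M[C]_(p, q)) (X : 'M[C]_q) :
  selfadj X -> selfadj (G *m X *m mxadj G).
Proof. by rewrite /selfadj !adjM adjK => ->; rewrite mulmxA. Qed.

Lemma stage1 (C : numClosedFieldType) r b (A B : 'M[C]_(r + b)) :
  admissible A B -> \rank B = r ->
  exists s : 'S_(r + b), exists G H K, [/\ G \in unitmx, selfadj H,
     G *m col_perm s A = block_mx H 0 (mxadj K) (- 1%:M) &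
     G *m col_perm s B = block_mx 1%:M K 0 0].
Proof.
case=> rAB sAB rB.
set L := col_ebase B; set U := row_ebase B.
have hB : B = L *m pid_mx r *m U by have := mulmx_ebase B; rewrite rB.
have Lu : L \in unitmx by exact: col_ebase_unit.
have Uu : U \in unitmx by exact: row_ebase_unit.
pose V := usubmx U.
have pidU : (pid_mx r : 'M[C]_(r + b)) *m U = col_mx V (0 : 'M[C]_(b, r + b)).
  by rewrite (@pid_mx_block _ b b r) -{1}(vsubmxK U) mul_block_col !mul1mx !mul0mx addr0 add0r.
have rV : \rank V = r.
  apply/eqP; rewrite eqn_leq rank_leq_row /=.
  have := rank_colmx_le V (dsubmx U); rewrite vsubmxK mxrank_unit //.
  move=> h; rewrite -(leq_add2r b); apply: leq_trans h _.
  by rewrite leq_add2l rank_leq_row.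
have [f [finj Wu]] := exists_indep rV.
have [s1 hs1] := perm_ext finj.
set W := colsub f V.
pose V2 := rsubmx (col_perm s1 V).
have eV1 : col_perm s1 V = row_mx W V2.
  rewrite -[LHS]hsubmxK; congr row_mx.
  by apply/matrixP => i j; rewrite !mxE hs1.
pose K := invmx W *m V2.
pose G0 := block_mx (invmx W) 0 0 1%:M *m invmx L.
have G0u : G0 \in unitmx.
  rewrite unitmx_mul unitmx_inv Lu andbT unitmxE det_ublock det1 mulr1 -unitmxE.
  by rewrite unitmx_inv.
have eB2 : G0 *m col_perm s1 B = block_mx 1%:M K 0 0.
  rewrite hB -mulmxA pidU !col_perm_mull col_perm_col col_perm0 eV1.
  rewrite /G0 -mulmxA mulKmx // mul_block_col !mul0mx !mul1mx addr0 add0r.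
  by rewrite mul_mx_row mulVmx // block_mxEv row_mx0.
pose A2 := G0 *m col_perm s1 A.
set A11 := ulsubmx A2; set A12 := ursubmx A2; set A21 := dlsubmx A2; set A22 := drsubmx A2.
have eA2 : A2 = block_mx A11 A12 A21 A22 by rewrite submxK.
have sP : selfadj (A2 *m mxadj (G0 *m col_perm s1 B)).
  rewrite /A2 adjM mulmxA -(mulmxA G0) colperm_adj.
  exact: selfadj_conj.
move: sP; rewrite eB2 eA2 adj_block adj1 !adj0 mulmx_block !mulmx0 !mulmx1 !addr0.
rewrite /selfadj adj_block => /eq_block_mx [sH e12 _ _].
have e21 : A21 + A22 *m mxadj K = 0 by rewrite -[LHS]adjK e12 adj0.
have e21' : A21 = - (A22 *m mxadj K).
  by apply/eqP; rewrite -addr_eq0 e21.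
have rA2B2 : \rank (row_mx A2 (G0 *m col_perm s1 B)) = (r + b)%N.
  rewrite /A2 (_ : row_mx _ _ = G0 *m row_mx (col_perm s1 A) (col_perm s1 B)); last first.
    by rewrite mul_mx_row.
  rewrite rank_mul_unitl //.
  have -> : row_mx (col_perm s1 A) (col_perm s1 B) =
            row_mx A B *m block_mx (perm_mx s1^-1) 0 0 (perm_mx s1^-1).
    by rewrite mul_row_block !mulmx0 addr0 add0r !col_permE.
  rewrite rank_mul_unitr; first exact: rAB.
  by rewrite unitmxE det_ublock unitrM -!unitmxE unitmx_perm.
have A22u : A22 \in unitmx.
  rewrite -row_free_unit /row_free eqn_leq rank_leq_row /=.
  have := rank_colmx_le (usubmx (row_mx A2 (G0 *m col_perm s1 B)))
                         (dsubmx (row_mx A2 (G0 *m col_perm s1 B))).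
  rewrite vsubmxK rA2B2 dsub_row eB2 eA2 !block_mxEv !col_mxKd row_mx0 rank_row_mx0.
  have -> : row_mx A21 A22 = A22 *m row_mx (- mxadj K) 1%:M.
    by rewrite mul_mx_row mulmxN mulmx1 e21'.
  move=> h; have h2 := mxrankM_maxl A22 (row_mx (- mxadj K) 1%:M).
  rewrite -(leq_add2l r); apply: leq_trans h _.
  exact: leq_add (rank_leq_row _) h2.
pose Z := invmx A22.
pose G1 := block_mx 1%:M (- (A12 *m Z)) 0 (- Z).
have G1u : G1 \in unitmx.
  rewrite unitmxE det_ublock det1 mul1r -unitmxE.
  by rewrite -scaleN1r unitmxZ ?unitrN1 // unitmx_inv.
exists s1, (G1 *m G0), (A11 + A12 *m mxadj K), K; split.
- by rewrite unitmx_mul G1u.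
- exact: sH.
- rewrite -mulmxA -/A2 eA2 mulmx_block !mul1mx !mul0mx !add0r e21'.
  rewrite !mulNmx !mulmxN opprK /Z mulKmx // mulmxKV // subrr.
  by rewrite -mulmxA mulKmx // opprK mulVmx.
- by rewrite -mulmxA eB2 mulmx_block !mul1mx !mul0mx !mulmx0 ?addr0 ?add0r.
Qed.

Lemma equiv_from (C : numClosedFieldType) n (A B : 'M[C]_n) (s : 'S_n) (G A' B' : 'M[C]_n) :
  G \in unitmx -> G *m col_perm s A = - A' -> G *m col_perm s B = B' ->
  forall X Y : 'cV[C]_n,
    A *m X + B *m Y = 0 <-> B' *m row_perm s Y = A' *m row_perm s X.
Proof.
move=> Gu hA hB X Y.
rewrite -(colperm_mul s A X) -(colperm_mul s B Y).
split => h.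
- have := congr1 (mulmx G) h; rewrite mulmxDr !mulmxA hA hB mulmx0 mulNmx.
  by move/eqP; rewrite addrC subr_eq0 => /eqP.
- rewrite -(mulKmx Gu (_ + _)) mulmxDr !mulmxA hA hB mulNmx h addNr mulmx0.
  done.
Qed.

Lemma exist_gen (C : numClosedFieldType) m a b (A B : 'M[C]_(m + a + b)) :
  admissible A B -> \rank B = (m + a)%N -> \rank A = (m + b)%N ->
  exists (s : 'S_(m + a + b)) P Q R S, [/\ S \in unitmx, selfadj S &
    forall X Y : 'cV[C]_(m + a + b), A *m X + B *m Y = 0 <->
      Bpqrs P Q R *m row_perm s Y = Apqrs P Q R S *m row_perm s X].
Proof.
move=> adm rB rA.
have [s1 [G [H [K [Gu sH hA hB]]]]] := stage1 adm rB.
have rH : \rank H = m.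
  have := rank_mul_unitl (col_perm s1 A) Gu.
  rewrite hA col_permE rank_mul_unitr ?unitmx_perm // rA.
  have -> : block_mx H 0 (mxadj K) (- 1%:M) =
            block_mx H 0 0 (- 1%:M) *m block_mx 1%:M 0 (- mxadj K) 1%:M.
    by rewrite mulmx_block !mulmx0 !mulmx1 !mul0mx ?addr0 ?add0r mulNmx mul1mx opprK.
  rewrite rank_mul_unitr; last by rewrite unitmxE det_lblock !det1 mulr1 unitr1.
  rewrite rank_diag_block_mx mxrank_opp mxrank1.
  by move/eqP; rewrite eqn_add2r => /eqP.
have [s [G' [P [Q [R [S [G'u Su sS eA eB]]]]]]] := stage2 Gu sH rH hA hB.
exists (s * s1)%g, P, Q, R, S; split => //.
apply: (equiv_from G'u); by rewrite col_permM.
Qed.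

Theorem theorem1 (C : numClosedFieldType) (n : nat) (A B : 'M[C]_n) :
  admissible A B ->
  [/\ (n <= \rank A + \rank B)%N,
      exists s : 'S_n, exists P Q R S, pqrs_rep A B s P Q R S &
      forall (s : 'S_n) P Q R S P' Q' R' S',
        pqrs_rep A B s P Q R S -> pqrs_rep A B s P' Q' R' S' ->
        [/\ P = P', Q = Q', R = R' & S = S']].
Proof.
move=> adm.
have hle : (n <= \rank A + \rank B)%N.
  case: adm => rAB _; rewrite -{1}rAB -mxrank_tr tr_row_mx -(mxrank_tr A) -(mxrank_tr B).
  exact: rank_colmx_le.
have hr1 := rank_leq_row A; have hr2 := rank_leq_row B.
have eB : \rank B = (\rank A + \rank B - n + (n - \rank A))%N.
  by rewrite addnBA // subnK // addKn.
have eA : \rank A = (\rank A + \rank B - n + (n - \rank B))%N.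
  by rewrite addnBA // subnK // addnK.
have e : (\rank A + \rank B - n + (n - \rank A) + (n - \rank B))%N = n.
  by rewrite -eB subnKC.
rewrite /pqrs_rep.
move: (\rank A + \rank B - n)%N (n - \rank A)%N (n - \rank B)%N e eB eA => m a b e eB eA.
subst n.
split => //.
- have [s [P [Q [R [S [Su sS h]]]]]] := exist_gen adm eB eA.
  exists s, P, Q, R, S; split => // X Y.
  by rewrite !conform_mx_id; exact: h.
- move=> s P Q R S P' Q' R' S' [Su _ h1] [_ _ h2].
  rewrite !conform_mx_id in h1 h2.
  apply: uniq_core Su _ => X' Y' hE.
  have := (h2 (row_perm s^-1 X') (row_perm s^-1 Y')).1.
  rewrite !row_permK'; apply; apply/h1; rewrite !row_permK'; exact: hE.
Qed.
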